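(* For any two graphs $G_1$ and $G_2$, $st(G_1\times G_2)\le st(G_1)\,st(G_2)+st(G_1)+st(G_2)$.
   Context: $G_1\times G_2$ is the Cartesian product: vertex set $V_1\times V_2$, with $(u_1,u_2)$ adjacent to $(v_1,v_2)$ iff either $u_1=v_1$ and $u_2v_2$ is an edge of $G_2$, or $u_2=v_2$ and $u_1v_1$ is an edge of $G_1$. A sorted ordering of a graph on $n$ vertices is a bijection $\pi$ from its vertices to $\{1,\dots,n\}$. A directed matching is a matching some of whose edges are oriented. A sorting network on $G$ is a triple $\mathcal{S}(H,M,\pi)$ where $H$ is a connected spanning subgraph of $G$, $\pi$ a sorted ordering, and $M=(m_1,\dots,m_{|M|})$ a sequence of directed matchings of $H$ covering every edge of $H$ at least once; each vertex holds a pebble with a value, and at stage $i$ each directed edge $u\to v$ of $m_i$ puts the smaller of its two pebbles on $u$ and the larger on $v$, while each undirected edge of $m_i$ swaps its pebbles; after all stages, for every initial arrangement of $n$ distinct values, vertex $i$ must hold the pebble of rank $\pi(i)$. The depth is $|M|$. The sorting number $st(G)$ is the minimum depth of any sorting network on $G$ (over all spanning subgraphs and sorted orderings); $st(G)=\infty$ if none exists. *)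

(* Defs.v *)
From mathcomp Require Import all_boot.
Set Implicit Arguments. Unset Strict Implicit. Unset Printing Implicit Defensive.

(* A (finite simple) graph is a vertex finType T with an edge relation e : rel T
   (symmetric, irreflexive: assumed as hypotheses where needed). *)

Definition cart_rel (T1 T2 : finType) (e1 : rel T1) (e2 : rel T2) : rel (T1 * T2) :=
  fun x y => ((x.1 == y.1) && e2 x.2 y.2) || ((x.2 == y.2) && e1 x.1 y.1).

Section Sorting.
Variable T : finType.

(* An edge of a directed matching: (u, v, true) is the directed edge u -> v
   (smaller pebble to u, larger to v); (u, v, false) is the undirected edge uv
   (swap). *)
Definition medge := (T * T * bool)%type.

Definition apply_edge (c : T -> nat) (t : medge) : T -> nat :=
  let: (u, v, b) := t in
  fun w => if b then
             (if w == u then minn (c u) (c v) else if w == v then maxn (c u) (c v) else c w)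
           else
             (if w == u then c v else if w == v then c u else c w).

(* Edges of a matching are vertex-disjoint, so the order of application in a
   stage is irrelevant. *)
Definition run_stage (c : T -> nat) (m : seq medge) : T -> nat := foldl apply_edge c m.
Definition run_net (c : T -> nat) (M : seq (seq medge)) : T -> nat := foldl run_stage c M.

Definition is_dmatching (h : rel T) (m : seq medge) : bool :=
  all (fun t => h t.1.1 t.1.2) m && uniq (flatten [seq [:: t.1.1; t.1.2] | t <- m]).

(* Sorted ordering pi uses
   ranks 0..n-1 (rank k+1 in the paper = k here). The rank of a value among the
   initial values a is the number of initial values strictly below it. *)
Definition sorting_network (e h : rel T) (M : seq (seq medge)) (pi : T -> 'I_#|T|) : Prop :=
  [/\ [/\ subrel h e, symmetric h & (forall x y, connect h x y)],
      all (is_dmatching h) M,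
      (forall x y, h x y ->
         exists m, m \in M /\ exists b, ((x, y, b) \in m) || ((y, x, b) \in m)),
      bijective pi &
      forall a : T -> nat, injective a ->
        forall i, #|[set y | a y < run_net a M i]| = pi i ].

Definition sorting_number (e : rel T) (s : nat) : Prop :=
  (exists h M pi, sorting_network e h M pi /\ size M = s) /\
  (forall h M pi, sorting_network e h M pi -> s <= size M).

End Sorting.

(* Main.v *)
Require Import Defs.
From mathcomp Require Import all_boot zify.
From Stdlib Require Import FunctionalExtensionality Classical.
Set Implicit Arguments. Unset Strict Implicit. Unset Printing Implicit Defensive.

Section Generic.
Variable T : finType.

Definition ends (l : seq (medge T)) : seq T := flatten [seq [:: t.1.1; t.1.2] | t <- l].

Lemma ends_cons t m : ends (t :: m) = [:: t.1.1; t.1.2] ++ ends m. Proof. by []. Qed.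
Lemma ends_cat m1 m2 : ends (m1 ++ m2) = ends m1 ++ ends m2.
Proof. by rewrite /ends map_cat flatten_cat. Qed.

Lemma run_net_flatten (c : T -> nat) M : run_net c M = foldl (@apply_edge T) c (flatten M).
Proof. by elim: M c => //= m M IH c; rewrite foldl_cat -IH. Qed.

Lemma minl m n : m <= n -> minn m n = m. Proof. by move/minn_idPl. Qed.
Lemma minr m n : n <= m -> minn m n = n. Proof. by move/minn_idPr. Qed.
Lemma maxl m n : n <= m -> maxn m n = m. Proof. by move/maxn_idPl. Qed.
Lemma maxr m n : m <= n -> maxn m n = n. Proof. by move/maxn_idPr. Qed.

Lemma minn_or x y : minn x y = x \/ minn x y = y.
Proof. have [h|h] : x <= y \/ y < x by (case: (leqP x y); [left|right]).
  by left; apply: minl.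
by right; apply: minr; apply: ltnW. Qed.
Lemma maxn_or x y : maxn x y = x \/ maxn x y = y.
Proof. have [h|h] : x <= y \/ y < x by (case: (leqP x y); [left|right]).
  by right; apply: maxr.
by left; apply: maxl; apply: ltnW. Qed.

Lemma from_input (a : T -> nat) l (c : T -> nat) :
  (forall w, exists y, c w = a y) -> forall w, exists y, foldl (@apply_edge T) c l w = a y.
Proof.
elim: l c => //= t l IH c Hc; apply: IH => w.
case: t => [[u v] b] /=.
case: b; case: (w == u); case: (w == v) => //;
  try (case: (minn_or (c u) (c v)) => ->); try (case: (maxn_or (c u) (c v)) => ->); by [].
Qed.

Lemma mono_min (f : nat -> nat) x y : {homo f : x y / x <= y} -> f (minn x y) = minn (f x) (f y).
Proof.
move=> hf; have [h|h] : x <= y \/ y < x by (case: (leqP x y); [left|right]).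
  by rewrite (minl h) (minl (hf _ _ h)).
by rewrite (minr (ltnW h)) (minr (hf _ _ (ltnW h))).
Qed.
Lemma mono_max (f : nat -> nat) x y : {homo f : x y / x <= y} -> f (maxn x y) = maxn (f x) (f y).
Proof.
move=> hf; have [h|h] : x <= y \/ y < x by (case: (leqP x y); [left|right]).
  by rewrite (maxr h) (maxr (hf _ _ h)).
by rewrite (maxl (ltnW h)) (maxl (hf _ _ (ltnW h))).
Qed.

Lemma net_mono (f : nat -> nat) l (c : T -> nat) : {homo f : x y / x <= y} ->
  foldl (@apply_edge T) (f \o c) l = f \o foldl (@apply_edge T) c l.
Proof.
move=> hf; elim: l c => //= t l IH c; rewrite -IH; congr foldl.
apply: functional_extensionality => w /=; case: t => [[u v] b] /=.
by case: b; case: (w == u); case: (w == v); rewrite /= ?mono_min ?mono_max.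
Qed.

Definition revE (t : medge T) : medge T :=
  let: (u, v, b) := t in if b then (v, u, true) else (u, v, false).

Lemma anti_min (f : nat -> nat) x y : (forall x y, x <= y -> f y <= f x) -> f (minn x y) = maxn (f x) (f y).
Proof.
move=> hf; have [h|h] : x <= y \/ y < x by (case: (leqP x y); [left|right]).
  by rewrite (minl h) (maxl (hf _ _ h)).
by rewrite (minr (ltnW h)) (maxr (hf _ _ (ltnW h))).
Qed.
Lemma anti_max (f : nat -> nat) x y : (forall x y, x <= y -> f y <= f x) -> f (maxn x y) = minn (f x) (f y).
Proof.
move=> hf; have [h|h] : x <= y \/ y < x by (case: (leqP x y); [left|right]).
  by rewrite (maxr h) (minr (hf _ _ h)).
by rewrite (maxl (ltnW h)) (minl (hf _ _ (ltnW h))).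
Qed.

Lemma net_anti (f : nat -> nat) l (c : T -> nat) : (forall x y, x <= y -> f y <= f x) ->
  foldl (@apply_edge T) (f \o c) (map revE l) = f \o foldl (@apply_edge T) c l.
Proof.
move=> hf; elim: l c => //= t l IH c; rewrite -IH; congr foldl.
apply: functional_extensionality => w /=; case: t => [[u v] b] /=.
case: b => /=; last by case: (w == u); case: (w == v).
case: (eqVneq w v) => [->|nv].
  case: (eqVneq v u) => [->|nvu]; first by rewrite ?eqxx /= ?minnn ?maxnn.
  by rewrite ?eqxx /= ?(negbTE nvu) anti_max // minnC.
case: (w == u) => //.
by rewrite anti_min // maxnC.
Qed.

Lemma mem_ends (m : seq (medge T)) t : t \in m -> (t.1.1 \in ends m) && (t.1.2 \in ends m).
Proof.
elim: m => // t0 m IH; rewrite inE ends_cons => /orP[/eqP ->|/IH/andP[h1 h2]].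
  by rewrite !mem_cat !inE !eqxx /= orbT.
by rewrite !mem_cat h1 h2 !orbT.
Qed.

Section Loc.
Variable A : Type.
Variable act : (T -> A) -> medge T -> T -> A.
Hypothesis act_out : forall c t w, w != t.1.1 -> w != t.1.2 -> act c t w = c w.
Hypothesis act_dep : forall c c' t w, c t.1.1 = c' t.1.1 -> c t.1.2 = c' t.1.2 ->
  (w == t.1.1) || (w == t.1.2) -> act c t w = act c' t w.

Lemma loc_out (m : seq (medge T)) c w :
  (forall t, t \in m -> (w != t.1.1) && (w != t.1.2)) -> foldl act c m w = c w.
Proof.
elim: m c => //= t0 m IH c H.
rewrite IH; last by move=> t ht; apply: H; rewrite inE ht orbT.
by case/andP: (H t0 (mem_head _ _)) => h1 h2; rewrite act_out.
Qed.

Lemma loc_in (m : seq (medge T)) c t w : uniq (ends m) -> t \in m ->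
  (w == t.1.1) || (w == t.1.2) -> foldl act c m w = act c t w.
Proof.
elim: m c => // t0 m IH c.
rewrite ends_cons cat_uniq => /and3P[U0 Hn Um]; rewrite inE /= => /orP[/eqP ->|Ht] Hw.
  have Hw' : w \notin ends m.
    apply/negP => hw; move/hasP: Hn; apply; exists w => //.
    by case/orP: Hw => /eqP ->; rewrite !inE eqxx ?orbT.
  apply: loc_out => t' ht'; case/andP: (mem_ends ht') => h1 h2.
  by apply/andP; split; apply/negP => /eqP E; move: Hw'; rewrite E ?h1 ?h2.
have Hno : forall x, x \in ends m -> (x != t0.1.1) && (x != t0.1.2).
  move=> x hx; apply/andP; split; apply/negP => /eqP E; move/hasP: Hn; apply; exists x => //;
  by rewrite E !inE eqxx ?orbT.
have [h1 h2] := andP (mem_ends Ht).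
have [a1 a2] := andP (Hno _ h1). have [b1 b2] := andP (Hno _ h2).
by rewrite (IH _ Um Ht Hw); apply: act_dep => //; apply: act_out.
Qed.
End Loc.

Lemma ends_noloop (m : seq (medge T)) t : uniq (ends m) -> t \in m -> t.1.1 != t.1.2.
Proof.
elim: m => // t0 m IH; rewrite ends_cons cat_uniq => /and3P[U0 Hn Um]; rewrite inE => /orP[/eqP ->|Ht].
  by move: U0; rewrite /= inE andbT.
exact: IH.
Qed.

Lemma ends_unique (m : seq (medge T)) t t' w : uniq (ends m) -> t \in m -> t' \in m ->
  (w == t.1.1) || (w == t.1.2) -> (w == t'.1.1) || (w == t'.1.2) -> t = t'.
Proof.
elim: m => // t0 m IH; rewrite ends_cons cat_uniq => /and3P[U0 Hn Um].
have Hx : forall t1 x, t1 \in m -> (x == t1.1.1) || (x == t1.1.2) -> x \notin [:: t0.1.1; t0.1.2].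
  move=> t1 x h1 hx; apply/negP => hx0; move/hasP: Hn; apply; exists x => //.
  by case/andP: (mem_ends h1) => a b; case/orP: hx => /eqP ->.
rewrite !inE => /orP[/eqP ->|Ht] /orP[/eqP ->|Ht'] H1 H2 //.
- by move: (Hx _ _ Ht' H2); rewrite !inE; case/orP: H1 => ->; rewrite ?orbT.
- by move: (Hx _ _ Ht H1); rewrite !inE; case/orP: H2 => ->; rewrite ?orbT.
- exact: IH.
Qed.

End Generic.

Section Thresh.
Variable T : finType.
Variable M : seq (seq (medge T)).
Variable pi : T -> 'I_#|T|.

Definition Sorts := forall (a : T -> nat) t i,
  (t <= run_net a M i) = (#|T| - #|[set y | t <= a y]| <= pi i).

Hypothesis Hrank : forall a : T -> nat, injective a ->
  forall i, #|[set y | a y < run_net a M i]| = pi i.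

Lemma nat_bool_inj (b1 b2 : bool) : (b1 : nat) = b2 -> b1 = b2.
Proof. by case: b1; case: b2. Qed.

Lemma thresh_inj (a : T -> nat) : injective a -> forall t i,
  (t <= run_net a M i) = (#|[set y | a y < t]| <= pi i).
Proof.
move=> ia t i; rewrite -(Hrank ia i); apply/idP/idP => H.
  by apply: subset_leq_card; apply/subsetP => y; rewrite !inE => h; apply: leq_trans H.
apply: contraTT H; rewrite -!ltnNge => H.
have [y0 Hy0] : exists y, run_net a M i = a y.
  by rewrite run_net_flatten; apply: from_input => w; exists w.
apply: proper_card; apply/properP; split.
  by apply/subsetP => y; rewrite !inE => h; apply: ltn_trans H.
by exists y0; rewrite !inE -Hy0 ?ltnn.
Qed.

Lemma sorts_of_rank : Sorts.
Proof.
move=> a t i.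
set N := #|T|.
have N0 : 0 < N by rewrite /N; apply/card_gt0P; exists i.
set f := fun x => nat_of_bool (t <= x).
have fm : {homo f : x y / x <= y}.
  by move=> x y h; rewrite /f; case: (boolP (t <= x)) => //= tx; rewrite (leq_trans tx h).
set b := f \o a.
have E1 : run_net b M i = f (run_net a M i).
  by rewrite !run_net_flatten /b net_mono.
set a' := fun y => b y * N + enum_rank y.
set g := fun x => nat_of_bool (N <= x).
have gm : {homo g : x y / x <= y}.
  by move=> x y h; rewrite /g; case: (boolP (N <= x)) => //= tx; rewrite (leq_trans tx h).
have Eb : b = g \o a'.
  apply: functional_extensionality => y; rewrite /g /a' /=.
  have hr : (enum_rank y : nat) < N by exact: ltn_ord.
  by rewrite /b /f /=; case: (t <= a y); rewrite /= ?mul1n ?mul0n ?add0n ?leq_addr // leqNgt hr.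
have ia' : injective a'.
  move=> x y; rewrite /a' => E.
  have : (b x * N + enum_rank x) %% N = (b y * N + enum_rank y) %% N by rewrite E.
  rewrite !modnMDl !modn_small; last 2 first.
    exact: ltn_ord.
    exact: ltn_ord.
  by move/val_inj/enum_rank_inj.
have E2 : run_net b M i = g (run_net a' M i).
  by rewrite Eb !run_net_flatten net_mono.
have E3 := thresh_inj ia' N i.
have E4 : #|[set y | a' y < N]| = N - #|[set y | t <= a y]|.
  have -> : [set y | a' y < N] = ~: [set y | t <= a y].
    apply/setP => y; rewrite !inE /a' /b /f /=.
    have hr : (enum_rank y : nat) < N by exact: ltn_ord.
    by case: (t <= a y) => /=; rewrite ?mul1n ?mul0n ?hr // ltnNge leq_addr.
  by rewrite /N -(cardsC [set y | t <= a y]) addKn.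
apply: nat_bool_inj; rewrite -/(f _) -E1 E2 /g E3 E4.
by [].
Qed.

End Thresh.

Lemma card_ltC (T : finType) (a : T -> nat) o :
  #|T| - #|[set y | o <= a y]| = #|[set y | a y < o]|.
Proof.
have -> : [set y | a y < o] = ~: [set y | o <= a y].
  by apply/setP => y; rewrite !inE ltnNge.
by rewrite -(cardsC [set y | o <= a y]) addKn.
Qed.

Lemma rank_of_sorts (T : finType) (M : seq (seq (medge T))) (pi : T -> 'I_#|T|) :
  Sorts M pi -> forall a : T -> nat, injective a ->
  forall i, #|[set y | a y < run_net a M i]| = pi i.
Proof.
move=> HS a ia i; set o := run_net a M i.
have [y0 Hy0] : exists y, o = a y.
  by rewrite /o run_net_flatten; apply: from_input => w; exists w.
have H1 := HS a o i; rewrite leqnn card_ltC in H1.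
have H2 := HS a o.+1 i; rewrite ltnn card_ltC in H2.
have E : [set y | a y < o.+1] = y0 |: [set y | a y < o].
  apply/setP => y; rewrite !inE ltnS leq_eqVlt; congr (_ || _).
  by rewrite Hy0; apply/eqP/eqP => [/ia|->].
rewrite E cardsU1 !inE -Hy0 ltnn /= in H2.
apply/eqP; rewrite eqn_leq -H1 andTb.
move: H2 => /esym/negbT; rewrite -ltnNge.
by rewrite add1n ltnS.
Qed.

Lemma nseq_step (q i m a : nat) : i <= m -> a <= m ->
  exists q' i', i' <= m /\
   drop a (nseq i q ++ nseq (m - i) q.+1) ++ map succn (take a (nseq i q ++ nseq (m - i) q.+1))
   = nseq i' q' ++ nseq (m - i') q'.+1.
Proof.
move=> im am; case: (leqP a i) => ai.
  have ES : nseq i q ++ nseq (m-i) q.+1 = nseq a q ++ (nseq (i-a) q ++ nseq (m-i) q.+1).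
    by rewrite catA -nseqD subnKC.
  rewrite ES drop_size_cat ?size_nseq // take_size_cat ?size_nseq // map_nseq.
  exists q, (i - a); split; first lia.
  by rewrite -catA -nseqD; congr (_ ++ nseq _ _); lia.
have ES : nseq i q ++ nseq (m-i) q.+1 = (nseq i q ++ nseq (a - i) q.+1) ++ nseq (m - a) q.+1.
  by rewrite -catA -nseqD; congr (_ ++ nseq _ _); lia.
rewrite ES drop_size_cat ?size_cat ?size_nseq; last lia.
rewrite take_size_cat ?size_cat ?size_nseq; last lia.
rewrite map_cat !map_nseq.
exists q.+1, (m - a + i); split; first lia.
by rewrite catA -nseqD; congr (_ ++ nseq _ _); lia.
Qed.

Section Count.
Variable T : finType.
Variable m : nat.

Definition sz (d : T -> nat) := \sum_(w : T) d w.
Definition zo (d : T -> nat) := [forall w, d w <= 1].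

Definition addx (x : T) (d : T -> nat) : T -> nat := fun w => if w == x then 1 else d w.

Lemma sum_eq1 (x : T) : \sum_(w : T) (w == x : nat) = 1.
Proof. by rewrite (bigD1 x) //= eqxx big1 // => w /negbTE ->. Qed.

Lemma sz_addx x d : d x = 0 -> sz (addx x d) = (sz d).+1.
Proof.
move=> h; rewrite /sz -addn1 -(sum_eq1 x) -big_split /=; apply: eq_bigr => w _.
by rewrite /addx; case: (eqVneq w x) => [->|]; rewrite ?h ?addn0.
Qed.

Lemma all_take_drop (A : Type) (P : pred A) k (s : seq A) :
  all P s -> all P (take k s) /\ all P (drop k s).
Proof. by rewrite -{1}(cat_take_drop k s) all_cat => /andP. Qed.

Lemma base_decomp (c : T -> nat) (s : seq T) : (forall u, c u <= m) -> uniq s ->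
  exists D : seq (T -> nat), [/\ all zo D,
    forall w, \sum_(d <- D) d w = if w \in s then c w else 0 &
    exists q i, i <= m /\ map sz D = nseq i q ++ nseq (m - i) q.+1].
Proof.
move=> cm; elim: s => [|x s IH] /=.
  exists (nseq m (fun _ => 0)); split.
  - by rewrite all_nseq; apply/orP; right; apply/forallP.
  - by move=> w; rewrite big_nseq; elim: m.
  - exists 0, m; split => //; rewrite subnn /= cats0 map_nseq; congr nseq.
    by rewrite /sz big1.
case/andP => xs us; have [D [zD sD [q [i [im eD]]]]] := IH us.
have szD : size D = m by rewrite -(size_map sz) eD size_cat !size_nseq; lia.
have Dx : all (fun d => d x == 0) D.
  by rewrite -(sum_nat_seq_eq0 _ predT); rewrite sD (negbTE xs).
set a := c x.
exists (drop a D ++ map (addx x) (take a D)); split.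
- have [zt zd] := all_take_drop a zD.
  rewrite all_cat zd /= all_map; apply: sub_all zt => d /forallP zd1 /=.
  by apply/forallP => w; rewrite /addx; case: (w == x).
- move=> w; rewrite big_cat /= big_map inE.
  case: (eqVneq w x) => [->|nwx] /=.
    have [t0 d0] := all_take_drop a Dx.
    have -> : \sum_(d <- drop a D) d x = 0 by apply/eqP; rewrite sum_nat_seq_eq0.
    rewrite add0n /addx (eq_bigr (fun _ => 1)) ?eqxx // sum1_size size_takel // szD; exact: cm.
  rewrite -sD -{3}(cat_take_drop a D) big_cat /= addnC; congr (_ + _).
  by apply: eq_bigr => d _; rewrite /addx (negbTE nwx).
- have [q' [i' [im' E']]] := nseq_step q im (cm x).
  exists q', i'; split => //; rewrite -E' map_cat map_drop eD; congr (_ ++ _).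
  have [t0 d0] := all_take_drop a Dx.
  rewrite -eD -map_take -/a; elim: (take a D) t0 => //= d l IHl /andP[/eqP dx hl].
  by rewrite sz_addx // IHl.
Qed.
End Count.
Arguments zo {T}. Arguments sz {T}. Arguments addx {T}.

Section Count2.
Variable T : finType.
Variable m : nat.

Definition capply (c : T -> nat) (t : medge T) : T -> nat :=
  let: (u, v, b) := t in fun w =>
    if b then (if w == u then c u + c v - m else if w == v then minn m (c u + c v) else c w)
    else (if w == u then c v else if w == v then c u else c w).

Definition swp (u v : T) (d : T -> nat) : T -> nat :=
  fun w => if w == u then d v else if w == v then d u else d w.

Lemma ae_true (d : T -> nat) u v w : apply_edge d (u, v, true) w =
  if w == u then minn (d u) (d v) else if w == v then maxn (d u) (d v) else d w.
Proof. by []. Qed.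
Lemma ae_false (d : T -> nat) u v w : apply_edge d (u, v, false) w =
  if w == u then d v else if w == v then d u else d w.
Proof. by []. Qed.

Lemma sz_swp u v (d : T -> nat) : sz (swp u v d) = sz d.
Proof.
set tp := fun w : T => if w == u then v else if w == v then u else w.
have tpK : involutive tp.
  move=> w; rewrite /tp.
  case: (eqVneq w u) => [->|nu].
    by case: (eqVneq v u) => [->|nvu]; rewrite ?eqxx.
  case: (eqVneq w v) => [->|nv]; first by rewrite ?eqxx.
  by rewrite (negbTE nu) (negbTE nv).
rewrite /sz [in RHS](reindex_inj (inv_inj tpK)) /=; apply: eq_bigr => w _.
rewrite /swp /tp; case: (eqVneq w u) => [_|nu] //.
by case: (eqVneq w v).
Qed.

Lemma zo_swp u v (d : T -> nat) : zo d -> zo (swp u v d).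
Proof.
move/forallP => h; apply/forallP => w; rewrite /swp.
by case: (w == u); case: (w == v).
Qed.

Lemma zo_le1 (d : T -> nat) w : zo d -> d w <= 1.
Proof. by move/forallP. Qed.

Lemma sum_le_size (D : seq (T -> nat)) w : all zo D -> \sum_(d <- D) (d w) <= size D.
Proof.
elim: D => [|d D IH]; first by rewrite big_nil.
by rewrite big_cons /= => /andP[zd /IH h]; have := zo_le1 w zd; lia.
Qed.

Lemma flip_lemma u v (D' : seq (T -> nat)) a : u != v -> all zo D' ->
  all (fun d => d u <= d v) D' -> a <= \sum_(d <- D') (d v - d u) ->
  exists D, [/\ all zo D, map (fun d => apply_edge d (u, v, true)) D = D',
    map sz D = map sz D',
    \sum_(d <- D) d u = \sum_(d <- D') d u + a &
    (\sum_(d <- D) d v = \sum_(d <- D') d v - a /\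
     forall w, w != u -> w != v -> \sum_(d <- D) d w = \sum_(d <- D') d w)].
Proof.
move=> nuv; elim: D' a => [|d D' IH] a.
  move=> _ _; rewrite big_nil leqn0 => /eqP ->; exists [::]; rewrite addn0 subn0.
  by split.
move=> /= /andP[zd zD] /andP[duv aD]; rewrite big_cons => ha.
have du1 := zo_le1 u zd; have dv1 := zo_le1 v zd.
have sD : \sum_(d0 <- D') (d0 v - d0 u) <= \sum_(d0 <- D') d0 v.
  by apply: leq_sum => d0 _; apply: leq_subr.
case: (boolP ((0 < a) && (d u < d v))) => [/andP[a0 lt]|nf].
  have du0 : d u = 0 by lia.
  have dv0 : d v = 1 by lia.
  have [D1 [z1 e1 s1 su1 [sv1 sw1]]] := IH (a - 1) zD aD (ltac:(lia)).
  exists (swp u v d :: D1); split.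
  - by rewrite /= zo_swp.
  - rewrite /= e1; congr (_ :: _); apply: functional_extensionality => w.
    have -> : swp u v d u = d v by rewrite /swp eqxx.
    have -> : swp u v d v = d u by rewrite /swp eq_sym (negbTE nuv) eqxx.
    rewrite du0 dv0 /swp.
    case: (eqVneq w u) => [->|nu]; first by rewrite du0.
    by case: (eqVneq w v) => [->|nv]; rewrite ?dv0.
  - by rewrite /= s1 sz_swp.
  - by rewrite !big_cons su1 /swp eqxx; lia.
  - split; first by rewrite !big_cons sv1 /swp eq_sym (negbTE nuv) eqxx; lia.
    by move=> w nu nv; rewrite !big_cons sw1 // /swp (negbTE nu) (negbTE nv).
have ha' : a <= \sum_(d0 <- D') (d0 v - d0 u).
  by move: nf; rewrite negb_and -!leqNgt => /orP[h|h]; lia.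
have [D1 [z1 e1 s1 su1 [sv1 sw1]]] := IH a zD aD ha'.
exists (d :: D1); split.
- by rewrite /= zd.
- rewrite /= e1; congr (_ :: _); apply: functional_extensionality => w.
  rewrite (minl duv) (maxr duv).
  case: (eqVneq w u) => [->|nu] //.
  by case: (eqVneq w v) => [->|nv].
- by rewrite /= s1.
- by rewrite !big_cons su1; lia.
- split; first by rewrite !big_cons sv1; have := sum_le_size v z1; lia.
  by move=> w nu nv; rewrite !big_cons sw1.
Qed.
End Count2.

Section Count3.
Variable T : finType.
Variable m : nat.
Arguments capply {T}.

Lemma sum_all1 (D : seq (T -> nat)) w : all zo D -> \sum_(d <- D) d w = size D -> all (fun d => d w == 1) D.
Proof.
elim: D => [|d D IH] //=; rewrite big_cons => /andP[zd zD] h.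
have h1 := zo_le1 w zd; have h2 := sum_le_size w zD.
by rewrite IH //; [rewrite andbT; apply/eqP; lia | lia].
Qed.

Lemma sum_sub_seq (D : seq (T -> nat)) u v : all (fun d => d u <= d v) D ->
  \sum_(d <- D) d u <= \sum_(d <- D) d v /\
  \sum_(d <- D) (d v - d u) = \sum_(d <- D) d v - \sum_(d <- D) d u.
Proof.
elim: D => [|d D IH] /=; first by rewrite !big_nil.
by move=> /andP[h /IH [h1 h2]]; rewrite !big_cons h2; split; lia.
Qed.

Lemma all_le_of1 (D : seq (T -> nat)) u v : all zo D -> all (fun d => d v == 1) D ->
  all (fun d => d u <= d v) D.
Proof.
elim: D => //= d D IH /andP[zd zD] /andP[/eqP dv hD].
by rewrite dv (zo_le1 u zd) IH.
Qed.

Lemma count_lemma (l : seq (medge T)) (c : T -> nat) : (forall u, c u <= m) ->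
  all (fun t => t.1.1 != t.1.2) l ->
  exists D : seq (T -> nat), [/\ all zo D, forall w, \sum_(d <- D) d w = c w,
    exists q i, i <= m /\ map sz D = nseq i q ++ nseq (m - i) q.+1 &
    forall w, foldl (capply m) c l w = \sum_(d <- D) foldl (@apply_edge T) d l w].
Proof.
elim: l c => [|t l IH] c cm.
  move=> _; have [D [zD sD bD]] := base_decomp cm (enum_uniq T).
  by exists D; split => // w; rewrite sD mem_enum.
case: t => [[u v] b] /= /andP[nuv al].
set c' := capply m c (u, v, b).
have c'm : forall w, c' w <= m.
  move=> w; rewrite /c' /capply; have := cm u; have := cm v; have := cm w.
  by clear c'; case: b; case: (w == u); case: (w == v); lia.
have [D' [zD' sD' [q [i [im bD']]]] fD'] := IH c' c'm al.
have szD' : size D' = m by rewrite -(size_map sz) bD' size_cat !size_nseq; lia.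
suff [D [zD eD sD szD]] : exists D : seq (T -> nat), [/\ all zo D,
    map (fun d => apply_edge d (u, v, b)) D = D', forall w, \sum_(d <- D) d w = c w &
    map sz D = map sz D'].
  exists D; split => //; first by exists q, i; rewrite szD.
  by move=> w /=; rewrite fD' -eD big_map.
have Hc' : forall w, c' w = capply m c (u, v, b) w by [].
clearbody c'; case: b Hc' => Hc'.
- have Hu : c' u = c u + c v - m by rewrite Hc' /capply eqxx.
  have Hv : c' v = minn m (c u + c v) by rewrite Hc' /capply eq_sym (negbTE nuv) eqxx.
  have Hw : forall w, w != u -> w != v -> c' w = c w.
    by move=> w nu nv; rewrite Hc' /capply (negbTE nu) (negbTE nv).
  have cu := cm u; have cv := cm v.
  have Huv : all (fun d => d u <= d v) D'.
    case: (leqP m (c u + c v)) => hm.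
      have h := sum_all1 (w:=v) zD'; rewrite sD' szD' Hv (minl hm) in h.
      exact: all_le_of1 zD' (h erefl).
    have : \sum_(d <- D') d u == 0 by rewrite sD' Hu; apply/eqP; lia.
    rewrite sum_nat_seq_eq0 => h; apply: sub_all h => d /eqP -> //.
  have [le1 eqs] := sum_sub_seq Huv.
  have ha : c u - c' u <= \sum_(d <- D') (d v - d u) by rewrite eqs !sD' Hu Hv; lia.
  have [D [zD eD szD su [sv sw]]] := flip_lemma nuv zD' Huv ha.
  exists D; split => // w.
  case: (eqVneq w u) => [->|nu]; first by rewrite su sD' Hu; lia.
  case: (eqVneq w v) => [->|nv]; first by rewrite sv sD' Hu Hv; lia.
  by rewrite sw // sD' Hw.
have Hu : c' u = c v by rewrite Hc' /capply eqxx.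
have Hv : c' v = c u by rewrite Hc' /capply eq_sym (negbTE nuv) eqxx.
have Hw : forall w, w != u -> w != v -> c' w = c w.
  by move=> w nu nv; rewrite Hc' /capply (negbTE nu) (negbTE nv).
have nvu : v != u by rewrite eq_sym.
exists (map (swp u v) D'); split.
- by rewrite all_map; apply: sub_all zD' => d; exact: zo_swp.
- rewrite -map_comp -[RHS]map_id; apply: eq_map => d /=; apply: functional_extensionality => w.
  rewrite /swp; case: (eqVneq w u) => [->|nu]; rewrite ?eqxx ?(negbTE nvu) //.
  by case: (eqVneq w v) => [->|nv]; rewrite ?eqxx ?(negbTE nvu) ?(negbTE nu) ?(negbTE nv).
- move=> w; rewrite big_map.
  case: (eqVneq w u) => [->|nu].
    by rewrite (eq_bigr (fun d => d v)) ?sD' ?Hv // => d _; rewrite /swp eqxx.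
  case: (eqVneq w v) => [->|nv].
    by rewrite (eq_bigr (fun d => d u)) ?sD' ?Hu // => d _; rewrite /swp (negbTE nvu) eqxx.
  by rewrite (eq_bigr (fun d => d w)) ?sD' ?Hw // => d _; rewrite /swp (negbTE nu) (negbTE nv).
- by rewrite -map_comp; apply: eq_map => d /=; exact: sz_swp.
Qed.
End Count3.

Section Acts.
Variable T : finType.

Lemma ae_out (c : T -> nat) (t : medge T) w : w != t.1.1 -> w != t.1.2 -> apply_edge c t w = c w.
Proof. by case: t => [[u v] b] /= /negbTE -> /negbTE ->; case: b. Qed.

Lemma ae_dep (c c' : T -> nat) (t : medge T) w : c t.1.1 = c' t.1.1 -> c t.1.2 = c' t.1.2 ->
  (w == t.1.1) || (w == t.1.2) -> apply_edge c t w = apply_edge c' t w.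
Proof.
by case: t => [[u v] b] /= h1 h2 /orP[/eqP ->|/eqP ->]; rewrite ?eqxx h1 h2 //; case: (v == u).
Qed.

Lemma cap_out m (c : T -> nat) (t : medge T) w : w != t.1.1 -> w != t.1.2 -> capply m c t w = c w.
Proof. by case: t => [[u v] b] /= /negbTE -> /negbTE ->; case: b. Qed.

Lemma cap_dep m (c c' : T -> nat) (t : medge T) w : c t.1.1 = c' t.1.1 -> c t.1.2 = c' t.1.2 ->
  (w == t.1.1) || (w == t.1.2) -> capply m c t w = capply m c' t w.
Proof.
by case: t => [[u v] b] /= h1 h2 /orP[/eqP ->|/eqP ->]; rewrite ?eqxx h1 h2 //; case: (v == u).
Qed.

Lemma stage_in (c : T -> nat) m t w : uniq (ends m) -> t \in m ->
  (w == t.1.1) || (w == t.1.2) -> run_stage c m w = apply_edge c t w.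
Proof. exact: (loc_in (@ae_out) (@ae_dep)). Qed.

Lemma stage_out (c : T -> nat) m w :
  (forall t, t \in m -> (w != t.1.1) && (w != t.1.2)) -> run_stage c m w = c w.
Proof. exact: (loc_out (@ae_out)). Qed.

Lemma cstage_in k (c : T -> nat) m t w : uniq (ends m) -> t \in m ->
  (w == t.1.1) || (w == t.1.2) -> foldl (capply k) c m w = capply k c t w.
Proof. exact: (loc_in (@cap_out k) (@cap_dep k)). Qed.

Lemma cstage_out k (c : T -> nat) m w :
  (forall t, t \in m -> (w != t.1.1) && (w != t.1.2)) -> foldl (capply k) c m w = c w.
Proof. exact: (loc_out (@cap_out k)). Qed.
End Acts.

Lemma ends_flatten (T : finType) (L : seq (seq (medge T))) : ends (flatten L) = flatten (map (@ends T) L).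
Proof. by elim: L => //= m L IH; rewrite ends_cat IH. Qed.

Lemma perm_ends_revE (T : finType) (m : seq (medge T)) : perm_eq (ends (map (@revE T) m)) (ends m).
Proof.
elim: m => //= t m IH; rewrite !ends_cons; case: t => [[u v] []] /=.
  by rewrite (perm_catCA [:: v] [:: u]) /= !perm_cons.
by rewrite /= !perm_cons.
Qed.

Lemma uniq_flatten_map (I X : eqType) (s : seq I) (L : I -> seq X) : uniq s ->
  (forall i, uniq (L i)) -> (forall i j x, x \in L i -> x \in L j -> i = j) ->
  uniq (flatten (map L s)).
Proof.
move=> us uL dL; elim: s us => //= i s IH /andP[ni us]; rewrite cat_uniq uL IH // andbT.
apply/hasP => [[x /flattenP [l /mapP [j js ->] xj] xi]].
by move: ni; rewrite (dL _ _ _ xi xj) js.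
Qed.

Section Prod.
Variables T1 T2 : finType.
Variable M2 : seq (seq (medge T2)).

Definition liftR (u : T1) (t : medge T2) : medge (prod T1 T2) :=
  let: (a, b, bb) := t in ((u, a), (u, b), bb).
Definition liftC (w : T2) (t : medge T1) : medge (prod T1 T2) :=
  let: (a, b, bb) := t in ((a, w), (b, w), bb).
Definition orientst (b : bool) (m : seq (medge T2)) := if b then map (@revE T2) m else m.
Definition Rstage (o : T1 -> bool) (m2 : seq (medge T2)) :=
  flatten [seq map (liftR u) (orientst (o u) m2) | u <- enum T1].
Definition Rblock o := map (Rstage o) M2.
Definition Estage (m : seq (medge T1)) := flatten [seq map (liftC w) m | w <- enum T2].
Definition orient_of (m : seq (medge T1)) : T1 -> bool :=
  fun u => has (fun t => t.2 && (t.1.2 == u)) m.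
Fixpoint PN (M : seq (seq (medge T1))) :=
  if M is m :: M' then Rblock (orient_of m) ++ Estage m :: PN M' else Rblock (fun _ => false).

Lemma ends_liftR u m : ends (map (liftR u) m) = map (pair u) (ends m).
Proof. by elim: m => //= t m IH; rewrite !ends_cons IH; case: t => [[a b] bb]. Qed.
Lemma ends_liftC w m : ends (map (liftC w) m) = map (fun a => (a, w)) (ends m).
Proof. by elim: m => //= t m IH; rewrite !ends_cons IH; case: t => [[a b] bb]. Qed.

Lemma uniq_orient b m : uniq (ends m) -> uniq (ends (orientst b m)).
Proof. by case: b => //=; rewrite (perm_uniq (perm_ends_revE m)). Qed.

Lemma uniq_Rstage o m2 : uniq (ends m2) -> uniq (ends (Rstage o m2)).
Proof.
move=> um; rewrite /Rstage ends_flatten -map_comp.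
apply: uniq_flatten_map; first exact: enum_uniq.
  move=> u /=; rewrite ends_liftR map_inj_uniq ?uniq_orient //.
  by move=> a b [].
by move=> i j x /=; rewrite !ends_liftR => /mapP[a _ ->] /mapP[b _ []].
Qed.

Lemma uniq_Estage m : uniq (ends m) -> uniq (ends (Estage m)).
Proof.
move=> um; rewrite /Estage ends_flatten -map_comp.
apply: uniq_flatten_map; first exact: enum_uniq.
  move=> w /=; rewrite ends_liftC map_inj_uniq //.
  by move=> a b [].
by move=> i j x /=; rewrite !ends_liftC => /mapP[a _ ->] /mapP[b _ []].
Qed.

Lemma mem_Rstage o m2 u t : t \in orientst (o u) m2 -> liftR u t \in Rstage o m2.
Proof.
move=> ht; apply/flattenP; exists (map (liftR u) (orientst (o u) m2)).
  by apply/mapP; exists u; rewrite ?mem_enum.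
exact: map_f.
Qed.

Lemma mem_Estage m w t : t \in m -> liftC w t \in Estage m.
Proof.
move=> ht; apply/flattenP; exists (map (liftC w) m).
  by apply/mapP; exists w; rewrite ?mem_enum.
exact: map_f.
Qed.

Lemma Rstage_row o m2 (c : T1 * T2 -> nat) u w : uniq (ends m2) ->
  run_stage c (Rstage o m2) (u, w) = run_stage (fun a => c (u, a)) (orientst (o u) m2) w.
Proof.
move=> um; set m' := orientst (o u) m2.
have um' : uniq (ends m') by exact: uniq_orient.
case: (boolP (has (fun t => (w == t.1.1) || (w == t.1.2)) m')) => [/hasP [t ht hw]|nh].
  rewrite (stage_in _ (uniq_Rstage o um) (mem_Rstage ht)); last first.
    by case: t ht hw => [[a b] bb] /= _; rewrite !xpair_eqE eqxx.
  rewrite (stage_in _ um' ht hw).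
  case: t ht hw => [[a b] bb] _ _ /=; rewrite !xpair_eqE eqxx /=.
  by case: bb.
rewrite !stage_out //.
  move=> t ht; apply/negP => /negP; rewrite negb_and !negbK => hw.
  by move/hasP: nh; apply; exists t.
move=> t /flattenP [l /mapP [u' _ ->] /mapP [t' ht' ->]].
case: t' ht' => [[a b] bb] ht' /=; rewrite !xpair_eqE.
case: (eqVneq u u') => [eu|]; last by rewrite !andFb.
subst u'; rewrite !andTb; apply/negP => /negP; rewrite negb_and !negbK => hw.
by move/hasP: nh; apply; exists (a, b, bb).
Qed.
End Prod.

Section Prod2.
Variables T1 T2 : finType.
Variable M2 : seq (seq (medge T2)).
Variable pi2 : T2 -> 'I_#|T2|.
Hypothesis S2 : Sorts M2 pi2.
Hypothesis uM2 : all (fun m => uniq (ends m)) M2.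

Definition rc (c : T1 * T2 -> nat) (u : T1) := #|[set a | 0 < c (u, a)]|.

Lemma Rblock_row_gen (L : seq (seq (medge T2))) o (c : T1 * T2 -> nat) u w :
  all (fun m => uniq (ends m)) L ->
  run_net c (map (Rstage o) L) (u, w) = run_net (fun a => c (u, a)) (map (orientst (o u)) L) w.
Proof.
elim: L c => //= m2 L IH c /andP[um uL]; rewrite IH //; congr run_net.
by apply: functional_extensionality => a; rewrite Rstage_row.
Qed.

Lemma le1_bool x : x <= 1 -> x = nat_of_bool (0 < x).
Proof. by case: x => [|[]]. Qed.

Lemma net01 (T : finType) (M : seq (seq (medge T))) (c : T -> nat) i :
  (forall x, c x <= 1) -> run_net c M i <= 1.
Proof.
move=> h; have [y ->] : exists y, run_net c M i = c y.
  by rewrite run_net_flatten; apply: from_input => w; exists w.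
exact: h.
Qed.

Lemma Rblock_sorted o (c : T1 * T2 -> nat) : (forall x, c x <= 1) -> forall u w,
  run_net c (Rblock M2 o) (u, w) = if o u then nat_of_bool (pi2 w < rc c u)
                                  else nat_of_bool (#|T2| - rc c u <= pi2 w).
Proof.
move=> c01 u w; rewrite /Rblock Rblock_row_gen //.
set r := fun a => c (u, a).
have r01 : forall a, r a <= 1 by move=> a; exact: c01.
have rcE : rc c u = #|[set a | 0 < r a]| by [].
case: (o u).
  rewrite run_net_flatten.
  have -> : flatten (map (orientst true) M2) = map (@revE T2) (flatten M2).
    by rewrite map_flatten.
  set f := fun x => 1 - x.
  have fa : forall x y, x <= y -> f y <= f x by move=> x y h; rewrite /f; lia.
  have -> : r = f \o (f \o r).
    by apply: functional_extensionality => a; rewrite /f /=; have := r01 a; lia.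
  rewrite net_anti // /= -run_net_flatten.
  have o01 := net01 M2 w (fun a => leq_subr (r a) 1 : (f \o r) a <= 1).
  rewrite (le1_bool o01) (S2 (f \o r) 1 w).
  have -> : #|[set y | 0 < (f \o r) y]| = #|T2| - rc c u.
    have -> : [set y | 0 < (f \o r) y] = ~: [set y | 0 < r y].
      by apply/setP => a; rewrite !inE /f /=; have := r01 a; case: (r a) => [|[]].
    by rewrite rcE -(cardsC [set y | 0 < r y]) addKn.
  have xle : rc c u <= #|T2| by rewrite /rc max_card.
  rewrite subKn // /f.
  by case: (leqP (rc c u) (pi2 w)).
have -> : map (orientst false) M2 = M2 by rewrite map_id_in.
have o01 := net01 M2 w r01.
by rewrite (le1_bool o01) (S2 r 1 w).
Qed.
End Prod2.

Lemma sum_and a b n : \sum_(0 <= k < n) ((a <= k) && (k < b) : nat) = minn b n - a.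
Proof.
elim: n => [|n IH]; first by rewrite big_geq //; lia.
rewrite big_nat_recr //= IH.
by case: (leqP a n) => h1; case: (ltnP n b) => h2 /=; lia.
Qed.

Lemma sum_or a b n : \sum_(0 <= k < n) ((a <= k) || (k < b) : nat) = n - (minn a n - b).
Proof.
elim: n => [|n IH]; first by rewrite big_geq //; lia.
rewrite big_nat_recr //= IH.
by case: (leqP a n) => h1; case: (ltnP n b) => h2 /=; lia.
Qed.

Lemma sum_ge a n : \sum_(0 <= k < n) ((a <= k) : nat) = n - a.
Proof.
elim: n => [|n IH]; first by rewrite big_geq //; lia.
by rewrite big_nat_recr //= IH; case: (leqP a n) => h1 /=; lia.
Qed.

Lemma sum_lt b n : \sum_(0 <= k < n) ((k < b) : nat) = minn b n.
Proof.
elim: n => [|n IH]; first by rewrite big_geq //; lia.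
by rewrite big_nat_recr //= IH; case: (ltnP n b) => h1 /=; lia.
Qed.

Lemma card_bij (T : finType) (pi : T -> 'I_#|T|) (P : pred nat) : bijective pi ->
  #|[set a | P (pi a)]| = \sum_(0 <= k < #|T|) P k.
Proof.
move=> bp; rewrite -sum1_card big_mkcond /= big_mkord (reindex pi) /=; last exact: onW_bij.
by apply: eq_bigr => a _; rewrite inE; case: (P _).
Qed.

Lemma orient_fst (T1 : finType) (m : seq (medge T1)) p q :
  uniq (ends m) -> (p, q, true) \in m -> orient_of m p = false.
Proof.
move=> um ht; apply/negP => /hasP [t' ht' /andP [_ /eqP e]].
have := ends_unique um ht ht' (w := p); rewrite eqxx e eqxx orbT => /(_ erefl erefl) E.
have := ends_noloop um ht; move: e; rewrite -E /= => ->; by rewrite eqxx.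
Qed.

Lemma orient_snd (T1 : finType) (m : seq (medge T1)) p q :
  (p, q, true) \in m -> orient_of m q = true.
Proof. by move=> ht; apply/hasP; exists (p, q, true) => //=; rewrite eqxx. Qed.

Lemma card_setE (T : finType) (P Q : pred T) : (forall a, P a = Q a) -> #|[set a | P a]| = #|[set a | Q a]|.
Proof. by move=> h; apply: eq_card => a; rewrite !inE h. Qed.

Section Exch.
Variables T1 T2 : finType.
Variable M2 : seq (seq (medge T2)).
Variable pi2 : T2 -> 'I_#|T2|.
Hypothesis S2 : Sorts M2 pi2.
Hypothesis uM2 : all (fun m => uniq (ends m)) M2.
Hypothesis bij2 : bijective pi2.

Lemma exch (m : seq (medge T1)) (c : T1 * T2 -> nat) : uniq (ends m) -> (forall x, c x <= 1) ->
  forall u, rc (run_stage (run_net c (Rblock M2 (orient_of m))) (Estage T2 m)) u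
            = foldl (capply #|T2|) (rc c) m u.
Proof.
move=> um c01 u.
pose n2 := #|T2|.
set o := orient_of m.
set s1 := run_net c (Rblock M2 o).
have Hs1 := Rblock_sorted S2 uM2 o c01.
set x := rc c.
have xle : forall u, x u <= #|T2| by move=> u'; rewrite /x /rc max_card.
have rcs1 : forall u, rc s1 u = x u.
  move=> u'; rewrite /rc /s1; case E: (o u').
    rewrite (card_setE (Q := fun a => (fun k => k < rc c u') (pi2 a))); last by move=> a; rewrite Hs1 E lt0b.
    have := card_bij (fun k => k < rc c u') bij2; rewrite /= => ->.
    by rewrite sum_lt; have := xle u'; rewrite /x -?/n2; lia.
  rewrite (card_setE (Q := fun a => (fun k => #|T2| - rc c u' <= k) (pi2 a))); last by move=> a; rewrite Hs1 E lt0b.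
  have := card_bij (fun k => #|T2| - rc c u' <= k) bij2; rewrite /= => ->.
  by rewrite sum_ge; have := xle u'; rewrite /x -?/n2; lia.
set s2 := run_stage s1 (Estage T2 m).
case: (boolP (has (fun t => (u == t.1.1) || (u == t.1.2)) m)) => [/hasP [t ht hw]|nh].
  rewrite (cstage_in _ _ um ht hw).
  have E : forall a, s2 (u, a) = apply_edge s1 (liftC a t) (u, a).
    move=> a; rewrite /s2 (stage_in _ (uniq_Estage T2 um) (mem_Estage a ht)) //.
    by case: t ht hw => [[p q] bb] /= _; rewrite !xpair_eqE eqxx !andbT.
  have npq := ends_noloop um ht.
  rewrite /rc (card_setE (Q := fun a => 0 < apply_edge s1 (liftC a t) (u, a))); last by move=> a; rewrite E.
  case: t ht hw E npq => [[p q] [|]] ht hw E /= npq.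
  - have op := orient_fst um ht; have oq := orient_snd ht.
    case/orP: hw => /eqP eu; subst u.
      rewrite (card_setE (Q := fun a => (fun k => (#|T2| - x p <= k) && (k < x q)) (pi2 a))); last first.
        move=> a; rewrite /= !xpair_eqE !eqxx /= /s1 !Hs1 /o op oq.
        by rewrite /x; case: (#|T2| - rc c p <= pi2 a); case: (pi2 a < rc c q).
      have := card_bij (fun k => (#|T2| - x p <= k) && (k < x q)) bij2; rewrite /= => ->.
      rewrite sum_and eqxx; have := xle p; have := xle q; rewrite -?/n2; lia.
    have nqp : q != p by rewrite eq_sym.
    rewrite (card_setE (Q := fun a => (fun k => (#|T2| - x p <= k) || (k < x q)) (pi2 a))); last first.
      move=> a; rewrite /= !xpair_eqE !eqxx (negbTE nqp) /= /s1 !Hs1 /o op oq.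
      by rewrite /x; case: (#|T2| - rc c p <= pi2 a); case: (pi2 a < rc c q).
    have := card_bij (fun k => (#|T2| - x p <= k) || (k < x q)) bij2; rewrite /= => ->.
    rewrite sum_or (negbTE nqp) eqxx; have := xle p; have := xle q; rewrite -?/n2; lia.
  - have nqp : q != p by rewrite eq_sym.
    case/orP: hw => /eqP eu; subst u.
      rewrite (card_setE (Q := fun a => 0 < s1 (q, a))); last first.
        by move=> a; rewrite /= !xpair_eqE !eqxx.
      by rewrite eqxx -rcs1.
    rewrite (card_setE (Q := fun a => 0 < s1 (p, a))); last first.
      by move=> a; rewrite /= !xpair_eqE !eqxx (negbTE nqp).
    by rewrite (negbTE nqp) eqxx -rcs1.
rewrite (cstage_out _ _ (w := u)); last first.
  move=> t ht; apply/negP => /negP; rewrite negb_and !negbK => hw.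
  by move/hasP: nh; apply; exists t.
rewrite -rcs1 /rc; apply: eq_card => a; rewrite !inE /s2 stage_out //.
move=> t /flattenP [l /mapP [a' _ ->] /mapP [t' ht' ->]].
case: t' ht' => [[p q] bb] ht' /=; rewrite !xpair_eqE.
apply/negP => /negP; rewrite negb_and !negbK => hw.
move/hasP: nh; apply; exists (p, q, bb) => //=.
by case/orP: hw => /andP [-> _]; rewrite ?orbT.
Qed.
End Exch.

Section Main.
Variables T1 T2 : finType.
Variable M2 : seq (seq (medge T2)).
Variable pi2 : T2 -> 'I_#|T2|.
Hypothesis S2 : Sorts M2 pi2.
Hypothesis uM2 : all (fun m => uniq (ends m)) M2.
Hypothesis bij2 : bijective pi2.

Lemma prod_main (M : seq (seq (medge T1))) (c : T1 * T2 -> nat) :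
  all (fun m => uniq (ends m)) M -> (forall x, c x <= 1) -> forall u w,
  run_net c (PN M2 M) (u, w) =
    nat_of_bool (#|T2| - foldl (foldl (capply #|T2|)) (rc c) M u <= pi2 w).
Proof.
elim: M c => [|m M IH] c /=.
  by move=> _ c01 u w; rewrite (Rblock_sorted S2).
case/andP => um uM c01 u w.
rewrite /run_net foldl_cat /= -/(run_net _ _).
set s1 := run_net c (Rblock M2 (orient_of m)).
have s101 : forall x, s1 x <= 1 by move=> x; exact: net01.
have s201 : forall x, run_stage s1 (Estage T2 m) x <= 1.
  by move=> x; have := net01 [:: Estage T2 m] x s101.
rewrite IH //; congr (nat_of_bool (_ - _ <= _)); congr (foldl _ _ _ _).
by apply: functional_extensionality => u'; rewrite /s1 (exch S2).
Qed.
End Main.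

Lemma final_arith n1 n2 p pw q i : p < n1 -> pw < n2 -> i <= n2 ->
  i*q + (n2-i)*q.+1 <= n1*n2 ->
  (n2 - (i * (n1 - q <= p) + (n2 - i) * (n1 - q.+1 <= p)) <= pw) =
  (n1*n2 - (i*q + (n2-i)*q.+1) <= p*n2 + pw).
Proof.
move=> hp hw hi hK.
have E : i * q + (n2 - i) * q.+1 = q * n2 + (n2 - i).
  by rewrite mulnS addnCA -mulnDl subnKC // addnC mulnC.
rewrite E; rewrite E in hK.
case: (leqP (n1 - q) p) => hA.
  have hB : n1 - q.+1 <= p by lia.
  rewrite hB /= !muln1 subnKC // subnn leq0n; apply/esym.
  have : n1 * n2 <= p * n2 + q * n2 by rewrite -mulnDl leq_mul2r; apply/orP; right; lia.
  lia.
case: (leqP (n1 - q.+1) p) => hB /=.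
  have hp' : p = n1 - q.+1 by lia.
  have hq : q < n1 by lia.
  rewrite muln0 muln1 add0n subKn //.
  have -> : n1 * n2 = (p * n2 + n2) + q * n2.
    have -> : n1 = p.+1 + q by lia.
    by rewrite mulnDl mulSn [n2 + _]addnC.
  lia.
rewrite !muln0 addn0 subn0 leqNgt hw /=; apply/esym/negbTE; rewrite -ltnNge.
have hq : q.+2 + p <= n1 by lia.
have : (q.+2 + p) * n2 <= n1 * n2 by rewrite leq_mul2r hq orbT.
rewrite !mulnDl !mulSn; lia.
Qed.

Lemma foldl_flat (A B : Type) (f : A -> B -> A) x (L : seq (seq B)) :
  foldl (foldl f) x L = foldl f x (flatten L).
Proof. by elim: L x => //= m L IH x; rewrite foldl_cat IH. Qed.

Lemma card_zo (T : finType) (d : T -> nat) : zo d -> #|[set y | 0 < d y]| = sz d.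
Proof.
move=> zd; rewrite /sz -sum1_card big_mkcond /=; apply: eq_bigr => y _.
by rewrite inE; have := zo_le1 y zd; case: (d y) => [|[]].
Qed.

Section ProdSorts.
Variables T1 T2 : finType.
Variable M1 : seq (seq (medge T1)).
Variable M2 : seq (seq (medge T2)).
Variable pi1 : T1 -> 'I_#|T1|.
Variable pi2 : T2 -> 'I_#|T2|.
Hypothesis S1 : Sorts M1 pi1.
Hypothesis S2 : Sorts M2 pi2.
Hypothesis uM1 : all (fun m => uniq (ends m)) M1.
Hypothesis uM2 : all (fun m => uniq (ends m)) M2.
Hypothesis bij1 : bijective pi1.
Hypothesis bij2 : bijective pi2.

Lemma ppi_lt (x : T1 * T2) : pi1 x.1 * #|T2| + pi2 x.2 < #|{: T1 * T2}|.
Proof.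
rewrite card_prod; have h1 := ltn_ord (pi1 x.1); have h2 := ltn_ord (pi2 x.2).
apply: (@leq_trans (pi1 x.1 * #|T2| + #|T2|)); first by rewrite ltn_add2l.
by rewrite addnC -mulSn leq_mul2r h1 orbT.
Qed.

Definition ppi (x : T1 * T2) : 'I_#|{: T1 * T2}| := Ordinal (ppi_lt x).

Lemma sum_D1 (D : seq (T1 -> nat)) u : all zo D ->
  \sum_(d <- D) foldl (@apply_edge T1) d (flatten M1) u =
  \sum_(d <- D) nat_of_bool (#|T1| - sz d <= pi1 u).
Proof.
elim: D => [|d D IH] /=; first by rewrite !big_nil.
case/andP => zd zD; rewrite !big_cons IH //; congr (_ + _).
have d01 : forall y, d y <= 1 by move=> y; exact: zo_le1.
rewrite -run_net_flatten (le1_bool (net01 M1 u d01)) (S1 d 1 u).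
by rewrite card_zo.
Qed.

Lemma sum_nseq2 (g : nat -> nat) i q n :
  \sum_(s <- nseq i q ++ nseq (n - i) q.+1) g s = i * g q + (n - i) * g q.+1.
Proof. by rewrite big_cat /= !big_nseq !iter_addn_0 mulnC [(n - i) * _]mulnC. Qed.

Lemma prod_sorts : Sorts (PN M2 M1) ppi.
Proof.
move=> a t [u w].
set f := fun x => nat_of_bool (t <= x).
have fm : {homo f : x y / x <= y}.
  by move=> x y h; rewrite /f; case: (boolP (t <= x)) => //= tx; rewrite (leq_trans tx h).
set b := f \o a.
have E1 : run_net b (PN M2 M1) (u, w) = f (run_net a (PN M2 M1) (u, w)).
  by rewrite !run_net_flatten /b net_mono.
have b01 : forall x, b x <= 1 by move=> x; rewrite /b /f /=; case: (t <= a x).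
have E2 := prod_main S2 uM2 bij2 uM1 b01 u w.
apply: nat_bool_inj; rewrite -/(f _) -E1 E2; congr nat_of_bool.
rewrite foldl_flat.
have rcle : forall u', rc b u' <= #|T2| by move=> u'; rewrite /rc max_card.
have nl : all (fun t => t.1.1 != t.1.2) (flatten M1).
  apply/allP => t' /flattenP [m hm ht]; exact: ends_noloop (allP uM1 m hm) ht.
have [D [zD sD [q [i [im bD]]] fD]] := count_lemma rcle nl.
rewrite fD sum_D1 // -(big_map sz predT (fun s => nat_of_bool (#|T1| - s <= pi1 u))) bD sum_nseq2.
have EK : #|[set y | t <= a y]| = i * q + (#|T2| - i) * q.+1.
  have -> : #|[set y | t <= a y]| = \sum_(y : T1 * T2) b y.
    rewrite -sum1_card big_mkcond /=; apply: eq_bigr => y _.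
    by rewrite inE /b /f /=; case: (t <= a y).
  have -> : \sum_(y : T1 * T2) b y = \sum_(u' : T1) \sum_(w' : T2) b (u', w').
    by rewrite pair_big; apply: eq_big => // -[].
  have -> : \sum_(u' : T1) \sum_(w' : T2) b (u', w') = \sum_(u' : T1) \sum_(d <- D) d u'.
    apply: eq_bigr => u' _; rewrite sD /rc (card_zo (d := fun a => b (u', a))) //.
    by rewrite /zo; apply/forallP => a0; exact: b01.
  rewrite exchange_big /= -(big_map sz predT id) bD sum_nseq2 /=.
  by rewrite mulnC [(_ - i) * _]mulnC.
have Kle : i * q + (#|T2| - i) * q.+1 <= #|T1| * #|T2|.
  by rewrite -EK -card_prod max_card.
rewrite EK /= card_prod final_arith //; exact: ltn_ord.
Qed.
End ProdSorts.

Section Valid.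
Variables T1 T2 : finType.
Variable M2 : seq (seq (medge T2)).

Lemma PN_mem (M : seq (seq (medge T1))) s : s \in PN M2 M ->
  (exists o m2, m2 \in M2 /\ s = Rstage o m2) \/ (exists m, m \in M /\ s = Estage T2 m).
Proof.
elim: M => [|m M IH] /=.
  by move/mapP => [m2 hm ->]; left; exists (fun _ => false), m2.
rewrite mem_cat inE => /orP [/mapP [m2 hm ->]|/orP [/eqP ->|/IH]].
- by left; exists (orient_of m), m2.
- by right; exists m; rewrite mem_head.
case=> [H|[m' [hm ->]]]; first by left.
by right; exists m'; rewrite inE hm orbT.
Qed.

Lemma Estage_in (M : seq (seq (medge T1))) m : m \in M -> Estage T2 m \in PN M2 M.
Proof.
elim: M => [|m' M IH] //=; rewrite inE => /orP [/eqP ->|/IH h].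
  by rewrite mem_cat inE eqxx orbT.
by rewrite mem_cat inE h !orbT.
Qed.

Lemma Rstage_in (M : seq (seq (medge T1))) : exists o, forall m2, m2 \in M2 -> Rstage o m2 \in PN M2 M.
Proof.
case: M => [|m M] /=; first by exists (fun _ => false) => m2 h; exact: map_f.
by exists (orient_of m) => m2 h; rewrite mem_cat map_f.
Qed.

Lemma size_PN (M : seq (seq (medge T1))) : size (PN M2 M) = size M * (size M2).+1 + size M2.
Proof.
elim: M => [|m M IH] /=; first by rewrite size_map.
by rewrite size_cat /= IH size_map mulSn; lia.
Qed.
End Valid.

Lemma exists_min (P : nat -> Prop) : (exists n, P n) -> exists n, P n /\ forall k, P k -> n <= k.
Proof.
move=> [n Pn]; elim/ltn_ind: n Pn => n IH Pn.
case: (classic (exists k, k < n /\ P k)) => [[k [kn Pk]]|H]; first exact: IH k kn Pk.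
exists n; split => // k Pk; rewrite leqNgt; apply/negP => kn; apply: H; by exists k.
Qed.

Section Net.
Variables T1 T2 : finType.
Variables (e1 h1 : rel T1) (e2 h2 : rel T2).
Variable M1 : seq (seq (medge T1)).
Variable M2 : seq (seq (medge T2)).
Variable pi1 : T1 -> 'I_#|T1|.
Variable pi2 : T2 -> 'I_#|T2|.
Hypothesis N1 : sorting_network e1 h1 M1 pi1.
Hypothesis N2 : sorting_network e2 h2 M2 pi2.

Let hP := cart_rel h1 h2.

Lemma lift1 (w : T2) a b : connect h1 a b -> connect hP (a, w) (b, w).
Proof.
move/connectP => [p pp ->]; elim: p a pp => [|c p IH] a /=; first by rewrite connect0.
case/andP => hac pp; apply: connect_trans (connect1 _) (IH _ pp).
by rewrite /hP /cart_rel /= eqxx hac orbT.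
Qed.

Lemma lift2 (u : T1) a b : connect h2 a b -> connect hP (u, a) (u, b).
Proof.
move/connectP => [p pp ->]; elim: p a pp => [|c p IH] a /=; first by rewrite connect0.
case/andP => hac pp; apply: connect_trans (connect1 _) (IH _ pp).
by rewrite /hP /cart_rel /= eqxx hac.
Qed.

Lemma ppi_inj : injective (ppi pi1 pi2).
Proof.
move=> [u1 w1] [u2 w2] /(congr1 val) /= E.
have n2p : 0 < #|T2| by apply/card_gt0P; exists w1.
have E2 : (pi2 w1 : nat) = pi2 w2.
  have := congr1 (modn^~ #|T2|) E; rewrite /= !modnMDl !modn_small //; exact: ltn_ord.
have E1 : (pi1 u1 : nat) = pi1 u2.
  have := congr1 (divn^~ #|T2|) E; rewrite /= !divnMDl // !divn_small ?addn0 //; exact: ltn_ord.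
case: N1 => _ _ _ [g1 c1 _] _; case: N2 => _ _ _ [g2 c2 _] _.
have -> : u1 = u2 by rewrite -(c1 u1) -(c1 u2); congr g1; exact: val_inj.
have -> : w1 = w2 by rewrite -(c2 w1) -(c2 w2); congr g2; exact: val_inj.
by [].
Qed.

Lemma product_network : sorting_network (cart_rel e1 e2) hP (PN M2 M1) (ppi pi1 pi2).
Proof.
case: N1 => [[sub1 sym1 con1] dm1 cov1 bij1 rk1].
case: N2 => [[sub2 sym2 con2] dm2 cov2 bij2 rk2].
have uM1 : all (fun m => uniq (ends m)) M1 by apply: sub_all dm1 => m /andP [].
have uM2 : all (fun m => uniq (ends m)) M2 by apply: sub_all dm2 => m /andP [].
split.
- split.
  + move=> x y; rewrite /hP /cart_rel => /orP [] /andP [ex hx]; apply/orP; [left|right];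
      rewrite ex /=; [exact: sub2 | exact: sub1].
  + by move=> x y; rewrite /hP /cart_rel sym1 sym2 (eq_sym x.1) (eq_sym x.2).
  + move=> [u1 w1] [u2 w2]; exact: connect_trans (lift1 w1 (con1 u1 u2)) (lift2 u2 (con2 w1 w2)).
- apply/allP => s /PN_mem [[o [m2 [hm ->]]]|[m [hm ->]]].
    have /andP [ah um] := allP dm2 m2 hm.
    apply/andP; split; last exact: uniq_Rstage.
    apply/allP => t /flattenP [l /mapP [u _ ->] /mapP [t' ht' ->]].
    have ht'' : h2 t'.1.1 t'.1.2.
      move: ht'; rewrite /orientst; case: (o u) => [/mapP [t0 h0 ->]|h0]; last exact: (allP ah).
      have := allP ah t0 h0; case: t0 h0 => [[a b] []] //= _; by rewrite sym2.
    by case: t' ht' ht'' => [[a b] bb] _ /= hab; rewrite /hP /cart_rel /= eqxx hab.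
  have /andP [ah um] := allP dm1 m hm.
  apply/andP; split; last exact: uniq_Estage.
  apply/allP => t /flattenP [l /mapP [w _ ->] /mapP [t' ht' ->]].
  have := allP ah t' ht'; case: t' ht' => [[a b] bb] _ /= hab.
  by rewrite /hP /cart_rel /= eqxx hab orbT.
- move=> [u1 w1] [u2 w2]; rewrite /hP /cart_rel /= => /orP [] /andP [/eqP <- hx].
    have [m2 [hm [b hb]]] := cov2 _ _ hx.
    have [o Ho] := Rstage_in M2 M1.
    exists (Rstage o m2); split; first exact: Ho.
    have key : forall a c bb, (a, c, bb) \in m2 ->
        exists b', ((u1, a, (u1, c), b') \in Rstage o m2) || ((u1, c, (u1, a), b') \in Rstage o m2).
      move=> a c bb h; case E: (o u1).
        case: bb h => h.
          exists true; apply/orP; right.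
          have : revE (a, c, true) \in orientst (o u1) m2 by rewrite E; exact: (map_f (@revE T2) h).
          by move/(mem_Rstage (T1 := T1)).
        exists false; apply/orP; left.
        have : revE (a, c, false) \in orientst (o u1) m2 by rewrite E; exact: (map_f (@revE T2) h).
        by move/(mem_Rstage (T1 := T1)).
      exists bb; apply/orP; left.
      have : (a, c, bb) \in orientst (o u1) m2 by rewrite E.
      by move/(mem_Rstage (T1 := T1)).
    case/orP: hb => h.
      exact: key h.
    by have [b' hb'] := key _ _ _ h; exists b'; rewrite orbC.
  have [m [hm [b hb]]] := cov1 _ _ hx.
  exists (Estage T2 m); split; first exact: Estage_in.
  exists b; case/orP: hb => h; apply/orP; [left|right].
    by have := mem_Estage w1 h.
  by have := mem_Estage w1 h.
- by apply: (@inj_card_bij _ _ (ppi pi1 pi2) ppi_inj); rewrite card_ord.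
- apply: rank_of_sorts; apply: prod_sorts uM1 uM2 bij2.
    exact: sorts_of_rank.
  exact: sorts_of_rank.
Qed.
End Net.

Theorem theorem2 (T1 T2 : finType) (e1 : rel T1) (e2 : rel T2) :
  symmetric e1 -> irreflexive e1 -> symmetric e2 -> irreflexive e2 ->
  forall s1 s2 : nat, sorting_number e1 s1 -> sorting_number e2 s2 ->
  exists2 s : nat, sorting_number (cart_rel e1 e2) s & s <= s1 * s2 + s1 + s2.
Proof.
move=> _ _ _ _ s1 s2 [[h1 [M1 [pi1 [N1 sz1]]]] _] [[h2 [M2 [pi2 [N2 sz2]]]] _].
have PNet := product_network N1 N2.
have Hex : exists n, exists h M pi,
    sorting_network (cart_rel e1 e2) h M pi /\ size M = n.
  by exists (size (PN M2 M1)), (cart_rel h1 h2), (PN M2 M1), (ppi pi1 pi2).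
have [s [[h [M [pi [SN szM]]]] Hmin]] := exists_min Hex.
exists s.
  split; first by exists h, M, pi.
  by move=> h' M' pi' SN'; apply: Hmin; exists h', M', pi'.
have : s <= size (PN M2 M1).
  by apply: Hmin; exists (cart_rel h1 h2), (PN M2 M1), (ppi pi1 pi2).
by rewrite size_PN sz1 sz2 mulnS; lia.
Qed.
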